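(* Let $X$ be an $\omega$-well-filtered coherent $d$-space. If $X\times X$ is a Fréchet space, then $X$ is sober.
   Context: For a $T_0$ space $X$, the specialization order is $x\le y$ iff $x\in\overline{\{y\}}$; a subset is saturated if it is an upper set in this order. $X$ is a $d$-space if it is $T_0$, its specialization order is a dcpo, and every open set of $X$ is Scott open with respect to the specialization order. $X$ is $\omega$-well-filtered if for every countable filtered family $\mathcal F$ of compact saturated subsets of $X$ and every open $U$, $\bigcap\mathcal F\subseteq U$ implies $F\subseteq U$ for some $F\in\mathcal F$. $X$ is coherent if the intersection of any two compact saturated subsets is compact. A space is Fréchet if whenever $x$ lies in the closure of a set $A$, some sequence in $A$ converges to $x$. A $T_0$ space is sober if every irreducible closed set equals $\overline{\{x\}}$ for some point $x$. *)

(* Defs.v *)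
From HB Require Import structures.
From mathcomp Require Import all_boot all_order all_algebra.
From mathcomp Require Import all_classical all_reals all_analysis.
Set Implicit Arguments. Unset Strict Implicit. Unset Printing Implicit Defensive.
Import Order.TTheory GRing.Theory Num.Theory.
Local Open Scope classical_set_scope.

Section NonHausdorff.
Context {X : topologicalType}.

Definition spec_le (x y : X) : Prop := closure [set y] x.

Definition saturated (A : set X) : Prop :=
  forall x y, A x -> spec_le x y -> A y.

Definition compact_saturated (K : set X) : Prop := compact K /\ saturated K.

Definition spec_directed (D : set X) : Prop :=
  D !=set0 /\ forall x y, D x -> D y -> exists2 z, D z & spec_le x z /\ spec_le y z.

Definition spec_sup (D : set X) (s : X) : Prop :=
  (forall d, D d -> spec_le d s) /\
  (forall u, (forall d, D d -> spec_le d u) -> spec_le s u).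

Definition spec_dcpo : Prop :=
  forall D : set X, spec_directed D -> exists s, spec_sup D s.

Definition spec_scott_open (U : set X) : Prop :=
  saturated U /\
  forall D s, spec_directed D -> spec_sup D s -> U s -> D `&` U !=set0.

Definition d_space : Prop :=
  @kolmogorov_space X /\ spec_dcpo /\
  forall U : set X, open U -> spec_scott_open U.

Definition filtered_family (F : set (set X)) : Prop :=
  F !=set0 /\ forall A B, F A -> F B -> exists2 C, F C & C `<=` A `&` B.

Definition omega_well_filtered : Prop :=
  forall F : set (set X),
    countable F -> filtered_family F -> (forall K, F K -> compact_saturated K) ->
    forall U : set X, open U -> \bigcap_(K in F) K `<=` U ->
    exists2 K, F K & K `<=` U.

Definition coherent : Prop :=
  forall K1 K2 : set X, compact_saturated K1 -> compact_saturated K2 ->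
    compact (K1 `&` K2).

Definition irreducible_closed (A : set X) : Prop :=
  closed A /\ A !=set0 /\
  forall B C : set X, closed B -> closed C -> A `<=` B `|` C -> A `<=` B \/ A `<=` C.

Definition sober : Prop :=
  @kolmogorov_space X /\
  forall A : set X, irreducible_closed A -> exists x, A = closure [set x].

End NonHausdorff.

Definition frechet_space (Y : topologicalType) : Prop :=
  forall (A : set Y) (y : Y), closure A y ->
    exists u : nat -> Y, (forall n, A (u n)) /\ u @ \oo --> y.

(* Main.v *)
Require Import Defs.
From mathcomp Require Import all_boot all_order all_algebra.
From mathcomp Require Import all_classical all_reals all_analysis.
Local Open Scope classical_set_scope.

Section Helpers.
Context {X : topologicalType}.

Lemma spec_refl (x : X) : spec_le x x.
Proof. exact: subset_closure. Qed.

Lemma nbhs_up {a b : X} {N : set X} : spec_le a b -> nbhs a N -> N b.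
Proof. by move=> h hN; case: (h _ hN) => c [/= -> ]. Qed.

Lemma open_up {O : set X} {a b : X} : open O -> O a -> spec_le a b -> O b.
Proof. move=> oO Oa h; apply: (nbhs_up (N:=O) h); exact: open_nbhs_nbhs. Qed.

Lemma spec_trans (x y z : X) : spec_le x y -> spec_le y z -> spec_le x z.
Proof.
move=> hxy hyz N; rewrite nbhsE; move=> [W [oO Ox] sON].
exists z; split => //; apply: sON; apply: (open_up oO _ hyz).
exact: (open_up oO Ox hxy).
Qed.

Lemma ev_in {u : nat -> X} {x : X} {O : set X} : u @ \oo --> x -> nbhs x O ->
  exists M, forall n, (M <= n)%N -> O (u n).
Proof. move=> hu hO. have := hu _ hO. case=> M /= HM H. exists M => n Hn. apply: H. exact Hn. Qed.

Lemma nbhs_fst (x y : X) (O : set X) : nbhs x O -> nbhs ((x, y) : X * X) [set p | O p.1].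
Proof. move=> hO. exists (O, setT) => /=. split => //. exact: filterT. by move=> [a b] []. Qed.

Lemma nbhs_snd (x y : X) (O : set X) : nbhs y O -> nbhs ((x, y) : X * X) [set p | O p.2].
Proof. move=> hO. exists (setT, O) => /=. split => //. exact: filterT. by move=> [a b] []. Qed.

Lemma nbhs_pair (x y : X) (N : set (X*X)) : nbhs ((x, y) : X * X) N ->
  exists P Q, nbhs x P /\ nbhs y Q /\ P `*` Q `<=` N.
Proof. case=> [[P Q]] /= [hP hQ] hPQ. by exists P, Q. Qed.

Lemma compact_up (a : X) : compact [set b | spec_le a b].
Proof.
move=> F PF Fa; exists a; split; first exact: spec_refl.
move=> C N FC hN; have [b [Cb ab]] := filter_ex (filterI FC Fa).
by exists b; split => //; exact: nbhs_up ab hN.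
Qed.

Lemma compact_fin (a : nat -> X) (P : nat -> Prop) k :
  compact [set b | exists2 m, (m < k)%N & P m /\ spec_le (a m) b].
Proof.
elim: k => [|k IH].
  by move=> F PF F0; have [b [m]] := filter_ex F0.
have -> : [set b | exists2 m, (m < k.+1)%N & P m /\ spec_le (a m) b] =
  [set b | exists2 m, (m < k)%N & P m /\ spec_le (a m) b] `|`
  [set b | P k /\ spec_le (a k) b].
  apply/seteqP; split => b /=.
    move=> [m]; rewrite ltnS leq_eqVlt => /orP [/eqP -> |hm] hb; first by right.
    by left; exists m.
  case=> [[m hm hb]|hb]; last by exists k.
  by exists m => //; apply: ltnW.
apply: compactU => //.
move=> F PF FB; case: (pselect (P k)) => hP; last first.
  by have [b [/hP]] := filter_ex FB.
have [p [hp hcl]] := compact_up (a k) F PF (filterS (fun b (h : P k /\ spec_le (a k) b) => h.2) FB).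
by exists p; split.
Qed.

Definition tail_up (a : nat -> X) (x : X) n :=
  [set b | spec_le x b \/ exists2 m, (n <= m)%N & spec_le (a m) b].

Lemma tail_up_mono a x n n' : (n <= n')%N -> tail_up a x n' `<=` tail_up a x n.
Proof.
move=> h b [hb|[m hm hb]]; [by left|right; exists m => //].
exact: leq_trans h hm.
Qed.

Lemma tail_up_sat a x n : saturated (tail_up a x n).
Proof.
move=> b c [hb|[m hm hb]] hbc; [left|right; exists m => //]; exact: spec_trans hbc.
Qed.

Lemma tail_up_compact (a : nat -> X) (x : X) n : a @ \oo --> x -> compact (tail_up a x n).
Proof.
move=> ha F PF FB.
case: (pselect (cluster F x)) => hx.
  by exists x; split => //; left; exact: spec_refl.
move: hx => /existsNP [C0 /existsNP [N0 /not_implyP [FC0 /not_implyP [hN0 hC0N0]]]].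
move: hN0; rewrite nbhsE; move=> [W0 [oW0 W0x] sO].
have [M HM] := ev_in ha (open_nbhs_nbhs (conj oW0 W0x)).
have FBf : F [set b | exists2 m, (m < M)%N & (n <= m)%N /\ spec_le (a m) b].
  apply: filterS (filterI FC0 FB) => b [C0b [xb|[m nm amb]]].
    by exfalso; apply: hC0N0; exists b; split => //; apply: sO; exact: open_up oW0 W0x xb.
  case: (ltnP m M) => hmM; first by exists m.
  by exfalso; apply: hC0N0; exists b; split => //; apply: sO; exact: open_up oW0 (HM m hmM) amb.
have [p [[m hm [nm amp]] clp]] := compact_fin a (fun m => (n <= m)%N) M F PF FBf.
by exists p; split => //; right; exists m.
Qed.

Lemma tail_limit (a : nat -> X) (x z : X) : a @ \oo --> x ->
  (forall n, tail_up a x n z) -> spec_le x z.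
Proof.
move=> ha hz N; rewrite nbhsE; move=> [W [oO Ox] sO].
have [M HM] := ev_in ha (open_nbhs_nbhs (conj oO Ox)).
case: (hz M) => [xz|[m hm amz]]; exists z; split => //; apply: sO.
  exact: open_up oO Ox xz.
exact: open_up oO (HM m hm) amz.
Qed.

End Helpers.
Arguments tail_up_mono {X a x n n'}.
Arguments tail_up_sat {X a x n}.
Arguments tail_up_compact {X a x} n.
Arguments tail_limit {X a x z}.

Theorem theorem3p9 (X : topologicalType) :
  omega_well_filtered (X := X) -> coherent (X := X) -> d_space (X := X) ->
  frechet_space (X * X)%type -> sober (X := X).
Proof.
move=> hwf hcoh [hT0 [hdcpo hscott]] hfr; split => // A [clA [[a0 Aa0] hirr]].
have hdir : spec_directed A.
  split; first by exists a0.
  move=> x y Ax Ay.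
  have hcl : closure [set p : X * X | A p.1 /\ p.1 = p.2] (x, y).
    move=> N /nbhs_pair [P [Q [hP [hQ hPQ]]]].
    move: hP hQ; rewrite !nbhsE; move=> [U [oU Ux] sUP] [V [oV Vy] sVQ].
    have : A `&` (U `&` V) !=set0.
      apply: contrapT => hne.
      have := hirr (~` U) (~` V); rewrite !closedC => /(_ oU oV).
      case.
      - move=> c Ac; case: (pselect (U c)) => hU; last by left.
        by right => hV; apply: hne; exists c.
      - by move=> /(_ x Ax).
      - by move=> /(_ y Ay).
    case=> c [Ac [Uc Vc]]; exists (c, c); split => //.
    by apply: hPQ; split; [apply: sUP|apply: sVQ].
  have [u [hu hcv]] := hfr _ _ hcl.
  pose a := fun n => (u n).1.
  have ha1 : a @ \oo --> x.
    move=> O hO; exact (hcv _ (nbhs_fst _ y _ hO)).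
  have ha2 : a @ \oo --> y.
    move=> O hO; have h := hcv _ (nbhs_snd x _ _ hO).
    have e : a = (fun n => (u n).2) by apply: funext => n; case: (hu n).
    rewrite e; exact h.
  pose KL := fun n => tail_up a x n `&` tail_up a y n.
  have [z [Az hz]] : exists z, A z /\ forall n, KL n z.
    apply: contrapT => hno.
    have hc : countable (range KL) by exact: card_image_le.
    have hf : filtered_family (range KL).
      split; first by exists (KL 0%N); exists 0%N.
      move=> _ _ [i _ <-] [j _ <-]; exists (KL (maxn i j)); first by exists (maxn i j).
      move=> b [hb1 hb2]; split; split.
      - exact: (tail_up_mono (leq_maxl i j) _ hb1).
      - exact: (tail_up_mono (leq_maxl i j) _ hb2).
      - exact: (tail_up_mono (leq_maxr i j) _ hb1).
      - exact: (tail_up_mono (leq_maxr i j) _ hb2).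
    have hcs : forall K, range KL K -> compact_saturated K.
      move=> _ [n _ <-]; split.
        by apply: hcoh; split; [exact: tail_up_compact ha1|exact: tail_up_sat|exact: tail_up_compact ha2|exact: tail_up_sat].
      by move=> b c [h1 h2] hbc; split; [exact: tail_up_sat h1 hbc|exact: tail_up_sat h2 hbc].
    have hop : open (~` A) by rewrite openC.
    have [_ [n _ <-] hsub] := hwf _ hc hf hcs _ hop (fun b hb hAb => hno (ex_intro _ b (conj hAb (fun n => hb _ (ex_intro2 _ _ n I erefl))))).
    have : KL n (a n) by split; right; exists n => //; exact: spec_refl.
    by move=> /hsub; apply; case: (hu n).
  exists z => //; split.
    by apply: (tail_limit ha1) => n; case: (hz n).
  by apply: (tail_limit ha2) => n; case: (hz n).
have [s [hub hlub]] := hdcpo A hdir.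
have As : A s.
  apply: contrapT => nAs.
  have hop : open (~` A) by rewrite openC.
  have [_ hsc] := hscott (~` A) hop.
  by have [d [Ad nAd]] := hsc A s hdir (conj hub hlub) nAs.
exists s; apply/seteqP; split; first by move=> d Ad; exact: hub.
have e := (closure_id A).1 clA.
by move=> p hp; rewrite e; apply: (closureS _ ) hp => q ->.
Qed.
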